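(* Let $\Gamma$ be a finite undirected simple graph which is a disjoint union $\Gamma=\bigsqcup_{i=1}^k\Gamma^{(i)}$ of graphs, the vertices of $\Gamma^{(i)}$ being $x^{(i)}_1,\dots,x^{(i)}_{n^{(i)}}$, and let $y_1,\dots,y_N$ be the commutator generators of $G_\Gamma$. Let $z^{(i)}_j,t_l\in\mathbb{Z}$ be such that there exist $i_1\neq i_2$ and indices $j_1,j_2$ with $z^{(i_1)}_{j_1}\neq0$ and $z^{(i_2)}_{j_2}\neq0$. Then \[Z_{G_\Gamma}\Big(\prod_i\prod_j (x^{(i)}_j)^{z^{(i)}_j}\prod_{l=1}^N y_l^{t_l}\Big)=\Big\langle\prod_i\prod_j (x^{(i)}_j)^{z^{(i)}_j/d}\Big\rangle\times\gamma_2(G_\Gamma)\cong\mathbb{Z}^{N+1},\] where $d=\gcd_{i,j}z^{(i)}_j$ and $Z_{G_\Gamma}$ denotes the centralizer.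
   Context: For a finite undirected simple graph $\Gamma$ with vertex set $\{x_1,\dots,x_n\}$ and edge set $E$, the group $G_\Gamma$ is defined by the presentation with generators $x_1,\dots,x_n$ and $y_{i,j}$ for each pair $i<j$ with $x_ix_j\notin E$, and relations $[x_j,x_i]=1$ if $x_ix_j\in E$; $[x_j,x_i]=y_{i,j}$ if $x_ix_j\notin E$ and $i<j$; and $[x_l,y_{i,j}]=1$ for all $l$ and all such $y_{i,j}$. $N$ is the number of non-adjacent pairs and the $y_{i,j}$ are enumerated $y_1,\dots,y_N$; they generate $\gamma_2(G_\Gamma)=[G_\Gamma,G_\Gamma]\cong\mathbb{Z}^N$. The disjoint union of graphs has as vertex and edge sets the disjoint unions of those of the pieces. The products $\prod_i\prod_j$ are taken in a fixed order of the vertices. *)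

(* Defs.v *)
From mathcomp Require Import all_boot all_order all_algebra.
Set Implicit Arguments. Unset Strict Implicit. Unset Printing Implicit Defensive.
Import Order.TTheory GRing.Theory Num.Theory.
Local Open Scope ring_scope.

(* Concrete normal-form model of G_Gamma for a graph on vertices 'I_n
   with adjacency relation e.  An element (a, s) stands for
     x_0^{a_0} x_1^{a_1} ... x_{n-1}^{a_{n-1}} * prod_{(i,j)} y_{i,j}^{s(i,j)}
   where s is supported on the non-adjacent pairs i < j (see [gwf]).
   Commutator convention [u,v] = u^-1 v^-1 u v, so x_j x_i = x_i x_j y_{i,j}
   for i < j non-adjacent; the y's are central. *)

Definition gelt (n : nat) :=
  ({ffun 'I_n -> int} * {ffun 'I_n * 'I_n -> int})%type.

Definition nonadj (n : nat) (e : rel 'I_n) (p : 'I_n * 'I_n) : bool :=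
  ((p.1 < p.2)%N && ~~ e p.1 p.2).

Definition ywf (n : nat) (e : rel 'I_n) (u : {ffun 'I_n * 'I_n -> int}) : Prop :=
  forall p, ~~ nonadj e p -> u p = 0.

Definition gwf (n : nat) (e : rel 'I_n) (g : gelt n) : Prop := ywf e g.2.

Definition cocyc (n : nat) (e : rel 'I_n) (a b : {ffun 'I_n -> int})
  : {ffun 'I_n * 'I_n -> int} :=
  [ffun p => if nonadj e p then a p.2 * b p.1 else 0].

Definition gmul (n : nat) (e : rel 'I_n) (g h : gelt n) : gelt n :=
  ([ffun i => g.1 i + h.1 i], [ffun p => g.2 p + h.2 p + cocyc e g.1 h.1 p]).

Definition gone (n : nat) : gelt n := ([ffun _ => 0], [ffun _ => 0]).

Definition ginv (n : nat) (e : rel 'I_n) (g : gelt n) : gelt n :=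
  ([ffun i => - g.1 i], [ffun p => - g.2 p + cocyc e g.1 g.1 p]).

Definition gpown (n : nat) (e : rel 'I_n) (g : gelt n) (m : nat) : gelt n :=
  iter m (fun x => gmul e x g) (gone n).

Definition gpowz (n : nat) (e : rel 'I_n) (g : gelt n) (m : int) : gelt n :=
  match m with
  | Posz k => gpown e g k
  | Negz k => ginv e (gpown e g k.+1)
  end.

Definition xword (n : nat) (a : {ffun 'I_n -> int}) : gelt n := (a, [ffun _ => 0]).

Definition yword (n : nat) (u : {ffun 'I_n * 'I_n -> int}) : gelt n := ([ffun _ => 0], u).

Definition gcd_all (n : nat) (z : {ffun 'I_n -> int}) : int :=
  foldr gcdz 0 [seq z i | i <- enum 'I_n].

(* Main.v *)
Require Import Defs.
From mathcomp Require Import all_boot all_order all_algebra.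
From mathcomp Require Import zify ring lra.
Import Order.TTheory GRing.Theory Num.Theory.
Local Open Scope ring_scope.
Set Implicit Arguments. Unset Strict Implicit.

Fixpoint Tn (k : nat) : nat := if k is k'.+1 then (Tn k' + k')%N else 0%N.
Definition T (m : int) : int := match m with Posz k => (Tn k)%:Z | Negz k => (Tn k.+2)%:Z end.

Lemma Tn2 k : (2 * Tn k + k = k * k)%N.
Proof. elim: k => //= k IH. nia. Qed.

Lemma Tspec m : 2 * T m = m * (m - 1).
Proof. case: m => k /=; have := Tn2 k; have := Tn2 k.+2; rewrite ?NegzE; lia. Qed.

Section S.
Variables (n : nat) (e : rel 'I_n).

Definition form (w : {ffun 'I_n -> int}) (m : int) : gelt n :=
  ([ffun i => m * w i], [ffun p => if nonadj e p then T m * (w p.2 * w p.1) else 0]).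

Lemma gpown_form w k : gpown e (xword w) k = form w k%:Z.
Proof.
elim: k => [|k IH].
  by rewrite /gpown /= /gone /form; congr pair; apply/ffunP => p; rewrite !ffunE ?mul0r ?if_same.
rewrite /gpown iterS -/(gpown e (xword w) k) IH /gmul /form /cocyc /xword /=.
congr pair; apply/ffunP => p; rewrite !ffunE /=.
  lia.
case: ifP => _; last by rewrite !addr0.
lia.
Qed.

Lemma gpowz_form w m : gpowz e (xword w) m = form w m.
Proof.
case: m => k; first exact: gpown_form.
rewrite /gpowz gpown_form /ginv /form /cocyc /=.
congr pair; apply/ffunP => p; rewrite !ffunE /= ?NegzE.
  lia.
case: ifP => _; last by rewrite oppr0 addr0.
have := Tn2 k.+1; have := Tn2 k.+2 => /=; nia.
Qed.

Lemma form_add w m1 m2 : gmul e (form w m1) (form w m2) = form w (m1 + m2).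
Proof.
rewrite /gmul /form /cocyc /=; congr pair; apply/ffunP => p; rewrite !ffunE /=.
  ring.
case: ifP => _; last by rewrite !addr0.
have := Tspec m1; have := Tspec m2; have := Tspec (m1+m2) => H1 H2 H3.
have -> : T (m1 + m2) = T m1 + T m2 + m1 * m2 by lia.
ring.
Qed.

Lemma mul_y (g : gelt n) u : gmul e g (yword u) = (g.1, [ffun p => g.2 p + u p]).
Proof.
rewrite /gmul /yword /cocyc /=; congr pair; apply/ffunP => p; rewrite !ffunE ?addr0 //.
by case: ifP; rewrite ?mulr0 addr0.
Qed.

End S.

Lemma gcd_all_dvd n (z : {ffun 'I_n -> int}) i : (gcd_all z %| z i)%Z.
Proof.
rewrite /gcd_all; have: i \in enum 'I_n by rewrite mem_enum.
elim: (enum 'I_n) => //= j r IH; rewrite inE => /orP[/eqP->|/IH H].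
  exact: dvdz_gcdl.
exact: dvdz_trans (dvdz_gcdr _ _) H.
Qed.

Lemma gcd_all_mul n (z : {ffun 'I_n -> int}) c b :
  (forall i, (c %| b * z i)%Z) -> (c %| b * gcd_all z)%Z.
Proof.
move=> H; rewrite /gcd_all; elim: (enum 'I_n) => /= [|j r IH].
  by rewrite mulr0 dvdz0.
suff: (c %| `|b|%:Z * gcdz (z j) (foldr gcdz 0 [seq z i | i <- r]))%Z.
  by rewrite !dvdzE !abszM.
rewrite mulz_gcdr dvdz_gcd H /=.
move: IH; by rewrite !dvdzE !abszM.
Qed.

Theorem lemma6p1 (n k : nat) (e : rel 'I_n)
  (e_sym : symmetric e) (e_irr : irreflexive e)
  (comp : 'I_n -> 'I_k)
  (comp_union : forall i j : 'I_n, e i j -> comp i = comp j)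
  (z : {ffun 'I_n -> int}) (t : {ffun 'I_n * 'I_n -> int})
  (t_wf : ywf e t)
  (two_pieces : exists j1 j2 : 'I_n,
      [/\ comp j1 != comp j2, z j1 != 0 & z j2 != 0]) :
  let g := gmul e (xword z) (yword t) in
  let d := gcd_all z in
  let g0 := xword [ffun i => (z i %/ d)%Z] in
  (forall h : gelt n, gwf e h ->
     (gmul e h g = gmul e g h <->
      exists (m : int) (u : {ffun 'I_n * 'I_n -> int}),
        ywf e u /\ h = gmul e (gpowz e g0 m) (yword u)))
  /\ (forall (m1 m2 : int) (u1 u2 : {ffun 'I_n * 'I_n -> int}),
        ywf e u1 -> ywf e u2 ->
        gmul e (gmul e (gpowz e g0 m1) (yword u1))
               (gmul e (gpowz e g0 m2) (yword u2))
        = gmul e (gpowz e g0 (m1 + m2)) (yword [ffun p => u1 p + u2 p]))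
  /\ (forall (m1 m2 : int) (u1 u2 : {ffun 'I_n * 'I_n -> int}),
        ywf e u1 -> ywf e u2 ->
        gmul e (gpowz e g0 m1) (yword u1) = gmul e (gpowz e g0 m2) (yword u2) ->
        m1 = m2 /\ u1 = u2).
Proof.
move=> g d g0.
have hg : g = (z, t).
  rewrite /g mul_y /=; congr pair; apply/ffunP => p; by rewrite !ffunE add0r.
have hP : forall m, gpowz e g0 m = form e [ffun i => (z i %/ d)%Z] m.
  by move=> m; rewrite gpowz_form.
case: two_pieces => j1 [j2 [hc hz1 hz2]].
have hzw : forall i, z i = [ffun i => (z i %/ d)%Z] i * d.
  by move=> i; rewrite ffunE divzK // /d gcd_all_dvd.
have hd0 : d != 0.
  apply: contra hz1 => /eqP d0; by rewrite hzw d0 mulr0.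
have hdm : forall c b, (forall i, (c %| b * z i)%Z) -> (c %| b * d)%Z.
  by move=> c b; exact: gcd_all_mul.
move: hP hzw hdm; rewrite /g0; clearbody g d g0; subst g.
move: [ffun i => (z i %/ d)%Z] => w hP hzw hdm.
have hw1 : w j1 != 0 by apply: contra hz1 => /eqP w0; rewrite hzw w0 mul0r.
split; last split.
- move=> h hwf; split.
  + move=> H. case: h hwf H => a s hwf H. rewrite /gwf /= in hwf.
    have hpa : forall p, nonadj e p -> a p.2 * z p.1 = z p.2 * a p.1.
      move=> p hnp; have := congr1 (fun x : gelt n => x.2 p) H.
      rewrite /gmul /cocyc /= !ffunE hnp => E; lia.
    have hrel : forall v u, comp v != comp u -> a v * z u = z v * a u.
      move=> v u hvu.
      have nvu : ~~ e v u by apply: contra hvu => /comp_union ->.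
      case: (ltngtP v u) => [lt|gt|eq].
      * have := hpa (v,u); rewrite /nonadj /= lt nvu /= => /(_ isT); lia.
      * have := hpa (u,v); rewrite /nonadj /= gt e_sym nvu /= => /(_ isT); lia.
      * by move: hvu; rewrite (val_inj eq) eqxx.
    have hall : forall v, z j1 * a v = a j1 * z v.
      move=> v; case: (eqVneq (comp v) (comp j1)) => hv.
      * have h2 : comp v != comp j2 by rewrite hv.
        have E1 := hrel v j2 h2.
        have E2 : a j2 * z j1 = z j2 * a j1 by apply: hrel; rewrite eq_sym.
        apply: (mulfI hz2).
        transitivity (z j1 * (a v * z j2)); first ring.
        rewrite E1.
        transitivity (z v * (a j2 * z j1)); first ring.
        rewrite E2; ring.
      * have := hrel v j1 hv; lia.
    have hdiv : (z j1 %| a j1 * d)%Z.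
      apply: hdm => i; rewrite -hall; exact: dvdz_mulr (dvdzz _).
    case/dvdzP: hdiv => m hm.
    have ha : forall i, a i = m * w i.
      move=> i; apply: (mulfI hz1); rewrite hall hzw.
      transitivity ((a j1 * d) * w i); first ring.
      rewrite hm; ring.
    exists m, [ffun p => s p - (form e w m).2 p]; split.
      by move=> p hp; rewrite !ffunE /= (negbTE hp) hwf // subr0.
    rewrite hP mul_y /form /=; congr pair; apply/ffunP => i; rewrite !ffunE.
      exact: ha.
    by rewrite addrC subrK.
  + case=> m [u [hu ->]]. rewrite hP mul_y /form /gmul /cocyc /=.
    congr pair; apply/ffunP => p; rewrite !ffunE /=.
      ring.
    case: (nonadj e p); last by ring.
    rewrite !hzw; ring.
- move=> m1 m2 u1 u2 _ _; rewrite !hP !mul_y /form /gmul /cocyc /=.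
  congr pair; apply/ffunP => p; rewrite !ffunE /=.
    ring.
  case: (nonadj e p); last by ring.
  have := Tspec m1; have := Tspec m2; have := Tspec (m1+m2) => H1 H2 H3.
  have -> : T (m1 + m2) = T m1 + T m2 + m1 * m2 by lia.
  ring.
- move=> m1 m2 u1 u2 _ _; rewrite !hP !mul_y /form /= => E.
  have E1 := congr1 (fun x : gelt n => x.1 j1) E; rewrite /= !ffunE in E1.
  have em : m1 = m2 by apply: (mulIf hw1).
  subst m2; split => //.
  apply/ffunP => p; have E2 := congr1 (fun x : gelt n => x.2 p) E; rewrite /= !ffunE in E2.
  exact: addrI E2.
Qed.
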